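(* Let $\mathbf X\in\mathbb R^{n\times d}$ have full column rank, $1\le k<d$, $\mathbf y\in\mathbb R^n$ and $\lambda>0$. Let $f_\lambda(\mathbf y;\boldsymbol\beta)=\frac1{2n}\|\mathbf y-\mathbf X\boldsymbol\beta\|_2^2+\lambda(\|\boldsymbol\beta_{1:k}\|_2+\|\boldsymbol\beta_{-1:k}\|_1)$ and $\hat{\boldsymbol\beta}^\lambda=\arg\min_{\boldsymbol\beta\in\mathbb R^d}f_\lambda(\mathbf y;\boldsymbol\beta)$. For $\mathbf b\in\mathbb R^k$ let $\hat{\boldsymbol\beta}^\lambda_{-1:k}(\mathbf b)=\arg\min_{\boldsymbol\gamma\in\mathbb R^{d-k}}\big(\frac1{2n}\|\mathbf y-\mathbf X_{1:k}\mathbf b-\mathbf X_{-1:k}\boldsymbol\gamma\|_2^2+\lambda\|\boldsymbol\gamma\|_1\big)$ and let $\hat{\boldsymbol\beta}^\lambda_*(\mathbf b)\in\mathbb R^d$ be the vector whose first $k$ coordinates are $\mathbf b$ and whose remaining coordinates are $\hat{\boldsymbol\beta}^\lambda_{-1:k}(\mathbf b)$. Then for every $\mathbf b\in\mathbb R^k$ the following are equivalent: (1) $\mathbf 0\in\partial_{\boldsymbol\beta_{1:k}}f_\lambda(\mathbf y;\boldsymbol\beta)\big|_{\boldsymbol\beta=\hat{\boldsymbol\beta}^\lambda_*(\mathbf b)}$; (2) $\hat{\boldsymbol\beta}^\lambda=\hat{\boldsymbol\beta}^\lambda_*(\mathbf b)$; (3) $\hat{\boldsymbol\beta}^\lambda_{1:k}=\mathbf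 b$.
   Context: $\mathbf X_{1:k}$ is the first $k$ columns of $\mathbf X$, $\mathbf X_{-1:k}$ the rest; $\boldsymbol\beta_{1:k}$ and $\boldsymbol\beta_{-1:k}$ analogously. $\partial_{\boldsymbol\beta_{1:k}}$ denotes the subdifferential of the (convex) function $\boldsymbol\beta_{1:k}\mapsto f_\lambda(\mathbf y;\boldsymbol\beta)$ with the remaining coordinates held fixed. Both minimizers are unique since $\mathbf X$ and $\mathbf X_{-1:k}$ have full column rank. *)

(* Defs.v *)
From HB Require Import structures.
From mathcomp Require Import all_boot all_order all_algebra.
From mathcomp Require Import reals.
Set Implicit Arguments. Unset Strict Implicit. Unset Printing Implicit Defensive.
Import Order.TTheory GRing.Theory Num.Theory.
Local Open Scope ring_scope.

Section Defs.
Variable R : realType.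

Definition norm2 (p : nat) (v : 'cV[R]_p) : R := Num.sqrt (\sum_i (v i 0) ^+ 2).
Definition norm1 (p : nat) (v : 'cV[R]_p) : R := \sum_i `|v i 0|.
Definition dotv (p : nat) (u v : 'cV[R]_p) : R := \sum_i u i 0 * v i 0.

(* f_lambda(y; beta), with d = k + m columns; beta_{1:k} = usubmx beta,
   beta_{-1:k} = dsubmx beta *)
Definition f_lam (n k m : nat) (X : 'M[R]_(n, k + m)) (y : 'cV[R]_n) (lam : R)
  (beta : 'cV[R]_(k + m)) : R :=
  (2 * n%:R)^-1 * (norm2 (y - X *m beta)) ^+ 2
  + lam * (norm2 (usubmx beta) + norm1 (dsubmx beta)).

Definition partial_obj (n k m : nat) (X : 'M[R]_(n, k + m)) (y : 'cV[R]_n) (lam : R)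
  (b : 'cV[R]_k) (gamma : 'cV[R]_m) : R :=
  (2 * n%:R)^-1 * (norm2 (y - lsubmx X *m b - rsubmx X *m gamma)) ^+ 2
  + lam * norm1 gamma.

Definition is_argmin (p : nat) (g : 'cV[R]_p -> R) (x : 'cV[R]_p) : Prop :=
  forall z, g x <= g z.

Definition is_subgradient (p : nat) (g : 'cV[R]_p -> R) (x v : 'cV[R]_p) : Prop :=
  forall z, g x + dotv v (z - x) <= g z.

End Defs.

(* Main.v *)
Require Import Defs.
From HB Require Import structures.
From mathcomp Require Import all_boot all_order all_algebra.
From mathcomp Require Import reals.
From mathcomp Require Import ring lra.
Import Order.TTheory GRing.Theory Num.Theory.
Set Implicit Arguments. Unset Strict Implicit. Unset Printing Implicit Defensive.
Local Open Scope ring_scope.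

Definition sq {R : realType} (p : nat) (v : 'cV[R]_p) : R := \sum_i (v i 0) ^+ 2.

Lemma sq_ge0 {R : realType} p (v : 'cV[R]_p) : 0 <= sq v.
Proof. by apply: sumr_ge0 => i _; apply: sqr_ge0. Qed.

Lemma norm2_sq {R : realType} p (v : 'cV[R]_p) : norm2 v ^+ 2 = sq v.
Proof. by rewrite /norm2 sqr_sqrtr // sq_ge0. Qed.

Lemma norm2_ge0 {R : realType} p (v : 'cV[R]_p) : 0 <= norm2 v.
Proof. exact: sqrtr_ge0. Qed.

Lemma sq_eq0 {R : realType} p (v : 'cV[R]_p) : sq v = 0 -> v = 0.
Proof.
move=> h; apply/matrixP => i j; rewrite (ord1 j) mxE.
have := psumr_eq0P (fun i _ => sqr_ge0 (v i 0)) h (i:=i) isT.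
by move/eqP; rewrite sqrf_eq0 => /eqP.
Qed.

Lemma sqD {R : realType} p (u v : 'cV[R]_p) :
  sq (u + v) = sq u + 2 * dotv u v + sq v.
Proof.
rewrite /sq /dotv mulr_sumr -!big_split /=; apply: eq_bigr => i _.
rewrite !mxE; ring.
Qed.

Lemma sqZ {R : realType} p (a : R) (v : 'cV[R]_p) : sq (a *: v) = a ^+ 2 * sq v.
Proof.
rewrite /sq mulr_sumr; apply: eq_bigr => i _; rewrite !mxE; ring.
Qed.

Lemma sqN {R : realType} p (v : 'cV[R]_p) : sq (- v) = sq v.
Proof. rewrite /sq; apply: eq_bigr => i _; rewrite !mxE; ring. Qed.

Lemma dotvDr {R : realType} p (u v w : 'cV[R]_p) : dotv u (v + w) = dotv u v + dotv u w.
Proof. rewrite /dotv -big_split /=; apply: eq_bigr => i _; rewrite !mxE; ring. Qed.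

Lemma dotvZr {R : realType} p (a : R) (u v : 'cV[R]_p) : dotv u (a *: v) = a * dotv u v.
Proof. rewrite /dotv mulr_sumr; apply: eq_bigr => i _; rewrite !mxE; ring. Qed.

Lemma dotvC {R : realType} p (u v : 'cV[R]_p) : dotv u v = dotv v u.
Proof. rewrite /dotv; apply: eq_bigr => i _; ring. Qed.

Lemma dotv0 {R : realType} p (u : 'cV[R]_p) : dotv 0 u = 0.
Proof. rewrite /dotv big1 // => i _; rewrite mxE; ring. Qed.

Lemma sq0 {R : realType} p : sq (0 : 'cV[R]_p) = 0.
Proof. rewrite /sq big1 // => i _; rewrite mxE; ring. Qed.

Lemma cauchy_schwarz {R : realType} p (u v : 'cV[R]_p) : dotv u v <= norm2 u * norm2 v.
Proof.
set s := norm2 u; set q := norm2 v.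
have hs : 0 <= s by apply: norm2_ge0.
have hq : 0 <= q by apply: norm2_ge0.
have su : sq u = s ^+ 2 by rewrite norm2_sq.
have sv : sq v = q ^+ 2 by rewrite norm2_sq.
have key : 0 <= sq (q *: u + (- s) *: v) := sq_ge0 _.
rewrite sqD !sqZ dotvZr dotvC dotvZr su sv in key.
have e : 0 <= 2 * (s * q) * (s * q - dotv u v).
  move: key; rewrite dotvC; set d := dotv u v => key; nra.
have [hsq0|sqp] := eqVneq (s * q) 0.
  move: hsq0 => /eqP; rewrite mulf_eq0 => /orP [] /eqP h0.
  - have hu : u = 0.
      apply: sq_eq0; rewrite su h0; ring.
    by rewrite hu dotv0 h0 mul0r.
  - have hv : v = 0.
      apply: sq_eq0; rewrite sv h0; ring.
    by rewrite hv dotvC dotv0 h0 mulr0.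
have sp : 0 < s * q by rewrite lt0r sqp mulr_ge0.
nra.
Qed.

Lemma norm2E {R : realType} p (v : 'cV[R]_p) : norm2 v = Num.sqrt (sq v).
Proof. by []. Qed.

Lemma norm2Z {R : realType} p (a : R) (v : 'cV[R]_p) : norm2 (a *: v) = `|a| * norm2 v.
Proof. by rewrite !norm2E sqZ sqrtrM ?sqr_ge0 // sqrtr_sqr. Qed.

Lemma norm2D {R : realType} p (u v : 'cV[R]_p) : norm2 (u + v) <= norm2 u + norm2 v.
Proof.
have h0 : 0 <= norm2 u + norm2 v by rewrite addr_ge0 // norm2_ge0.
rewrite -(ger0_norm h0) -sqrtr_sqr norm2E ler_wsqrtr //.
rewrite sqD sqrrD !norm2_sq.
have := cauchy_schwarz u v; lra.
Qed.

Definition sublin {R : realType} p (P : 'cV[R]_p -> R) :=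
  forall a c u v, 0 <= a -> 0 <= c -> P (a *: u + c *: v) <= a * P u + c * P v.

Lemma norm2_sublin {R : realType} p : sublin (@norm2 R p).
Proof.
move=> a c u v ha hc; apply: le_trans (norm2D _ _) _.
by rewrite !norm2Z !ger0_norm.
Qed.

Lemma norm1_sublin {R : realType} p : sublin (@norm1 R p).
Proof.
move=> a c u v ha hc; rewrite /norm1 !mulr_sumr -big_split /=.
apply: ler_sum => i _; rewrite !mxE.
apply: le_trans (ler_normD _ _) _.
by rewrite !normrM (ger0_norm ha) (ger0_norm hc).
Qed.

Lemma key_lim {R : realType} (a c : R) :
  (forall t, 0 < t -> t <= 1 -> 0 <= a * t + c * t ^+ 2) -> 0 <= a.
Proof.
move=> h; rewrite leNgt; apply/negP => ha.
have [hc|hc] := lerP c 0.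
  have := h 1 ltr01 (lexx _); rewrite expr1n; lra.
have [ht|ht] := lerP (- a) (2 * c).
  set t := - a / (2 * c).
  have tp : 0 < t by rewrite /t divr_gt0 // ?oppr_gt0 // mulr_gt0.
  have t1 : t <= 1 by rewrite /t ler_pdivrMr ?mulr_gt0 // mul1r.
  have ct : c * t = - a / 2 by rewrite /t; field; lra.
  have := h t tp t1.
  have -> : a * t + c * t ^+ 2 = t * (a + c * t) by ring.
  rewrite ct; nra.
have := h 1 ltr01 (lexx _); rewrite expr1n; lra.
Qed.

Definition Fg {R : realType} n p (c0 : R) (z : 'cV[R]_n) (A : 'M[R]_(n, p))
  (Pf : 'cV[R]_p -> R) (beta : 'cV[R]_p) : R :=
  c0 * sq (z - A *m beta) + Pf beta.

Lemma uniq_min {R : realType} n p (c0 : R) (z : 'cV[R]_n) (A : 'M[R]_(n, p))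
  (Pf : 'cV[R]_p -> R) : 0 < c0 -> sublin Pf ->
  (forall d : 'cV[R]_p, A *m d = 0 -> d = 0) ->
  forall g1 g2, is_argmin (Fg c0 z A Pf) g1 -> is_argmin (Fg c0 z A Pf) g2 -> g1 = g2.
Proof.
move=> hc0 hP hA g1 g2 h1 h2.
set mid := (2^-1 : R) *: g1 + (2^-1 : R) *: g2.
have hm := h1 mid; have e12 := h1 g2; have e21 := h2 g1.
have hPm := hP (2^-1) (2^-1) g1 g2.
rewrite /Fg in hm e12 e21.
have em : z - A *m mid = (2^-1 : R) *: (z - A *m g1) + (2^-1 : R) *: (z - A *m g2).
  rewrite /mid mulmxDr -!scalemxAr.
  move: (A *m g1) (A *m g2) => a1 a2; apply/matrixP => i j; rewrite !mxE; field; done.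
have ed : A *m (g1 - g2) = (z - A *m g2) + (-1) *: (z - A *m g1).
  rewrite mulmxBr.
  move: (A *m g1) (A *m g2) => a1 a2; apply/matrixP => i j; rewrite !mxE; ring.
have hpm : Pf mid <= 2^-1 * Pf g1 + 2^-1 * Pf g2 by apply: hPm; rewrite invr_ge0 ler0n.
have hsq : sq (A *m (g1 - g2)) <= 0.
  rewrite ed; rewrite em in hm.
  move: hm e12 e21 hpm.
  move: (z - A *m g1) (z - A *m g2) => u1 u2.
  rewrite sqD sqZ dotvZr.
  rewrite sqD !sqZ dotvZr dotvC dotvZr.
  have hw1 := sq_ge0 u1.
  set w1 := sq u1; set w2 := sq u2; set d := dotv u2 u1.
  move=> hm e12 e21 hpm.
  set h := (2^-1 : R) in hm hpm *.
  have hh : h * 2 = 1 by rewrite /h mulVf // pnatr_eq0.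
  have hh2 : h ^+ 2 * 4 = 1 by rewrite (_ : h ^+ 2 * 4 = (h * 2) ^+ 2); [rewrite hh expr1n | ring].
  nra.
have : sq (A *m (g1 - g2)) = 0 by apply/eqP; rewrite eq_le hsq sq_ge0.
move/sq_eq0/hA/eqP; rewrite subr_eq0 => /eqP //.
Qed.

Lemma Fg_exp {R : realType} n p (c0 : R) (z : 'cV[R]_n) (A : 'M[R]_(n, p))
  (Pf : 'cV[R]_p -> R) (b0 D : 'cV[R]_p) (t : R) :
  Fg c0 z A Pf (b0 + t *: D) =
  c0 * sq (z - A *m b0) + t * (- (2 * c0) * dotv (z - A *m b0) (A *m D))
  + t ^+ 2 * (c0 * sq (A *m D)) + Pf (b0 + t *: D).
Proof.
rewrite /Fg.
have -> : z - A *m (b0 + t *: D) = (z - A *m b0) + (- t) *: (A *m D).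
  rewrite mulmxDr -scalemxAr.
  move: (A *m b0) (A *m D) => a1 a2; apply/matrixP => i j; rewrite !mxE; ring.
rewrite sqD sqZ dotvZr; ring.
Qed.

Lemma dir_lemma {R : realType} n p (c0 : R) (z : 'cV[R]_n) (A : 'M[R]_(n, p))
  (Pf : 'cV[R]_p -> R) (b0 D : 'cV[R]_p) (K : R) :
  0 <= c0 ->
  (forall t, 0 < t -> t <= 1 -> Fg c0 z A Pf b0 <= Fg c0 z A Pf (b0 + t *: D)) ->
  (forall t, 0 < t -> t <= 1 -> Pf (b0 + t *: D) <= (1 - t) * Pf b0 + t * K) ->
  0 <= - (2 * c0) * dotv (z - A *m b0) (A *m D) + (K - Pf b0).
Proof.
move=> hc0 h1 h2; apply: (@key_lim _ _ (c0 * sq (A *m D))) => t t0 t1.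
have := h1 t t0 t1; have := h2 t t0 t1.
rewrite Fg_exp /Fg.
set L := - (2 * c0) * _; set P0 := Pf b0; set Pt := Pf _; set C := c0 * sq (A *m D).
move=> ha hb.
have e : (L + (K - P0)) * t + C * t ^+ 2 = t * L + t ^+ 2 * C + t * K - t * P0 by ring.
rewrite e; rewrite mulrBl mul1r in ha.
lra.
Qed.

Theorem lemmaC9 (R : realType) (n k m : nat) (X : 'M[R]_(n, k + m))
  (y : 'cV[R]_n) (lam : R)
  (hk : (0 < k)%N) (hm : (0 < m)%N) (hX : \rank X = (k + m)%N) (hlam : 0 < lam)
  (betahat : 'cV[R]_(k + m)) (hbeta : is_argmin (f_lam X y lam) betahat)
  (gammahat : 'cV[R]_k -> 'cV[R]_m)
  (hgamma : forall b, is_argmin (partial_obj X y lam b) (gammahat b))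
  (b : 'cV[R]_k) :
  (is_subgradient (fun b' => f_lam X y lam (col_mx b' (gammahat b))) b 0
     <-> betahat = col_mx b (gammahat b))
  /\ (betahat = col_mx b (gammahat b) <-> usubmx betahat = b).
Proof.
set c0 : R := (2 * n%:R)^-1.
have hn : (0 < n)%N.
  have h := rank_leq_row X; rewrite hX in h.
  by apply: leq_trans h; rewrite addn_gt0 hk.
have hc0 : 0 < c0 by rewrite /c0 invr_gt0 mulr_gt0 // ltr0n.
set PF := fun beta : 'cV[R]_(k + m) => lam * (norm2 (usubmx beta) + norm1 (dsubmx beta)).
set PG := fun g : 'cV[R]_m => lam * norm1 g.
have hFe : forall beta, f_lam X y lam beta = Fg c0 y X PF beta.
  by move=> beta; rewrite /f_lam /Fg norm2_sq.
have hGe : forall b' g, partial_obj X y lam b' g = Fg c0 (y - lsubmx X *m b') (rsubmx X) PG g.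
  by move=> b' g; rewrite /partial_obj /Fg norm2_sq.
have hcol : forall u v, f_lam X y lam (col_mx u v) = partial_obj X y lam u v + lam * norm2 u.
  move=> u v; rewrite /f_lam /partial_obj col_mxKu col_mxKd.
  rewrite -{1}(hsubmxK X) mul_row_col opprD addrA; ring.
have hXinj : forall d : 'cV[R]_(k + m), X *m d = 0 -> d = 0.
  have rf : row_free X^T by rewrite /row_free mxrank_tr hX.
  move=> d hd; apply: trmx_inj; rewrite trmx0; apply: (row_free_inj rf).
  by rewrite /= -trmx_mul hd trmx0 mul0mx.
have hXrinj : forall d : 'cV[R]_m, rsubmx X *m d = 0 -> d = 0.
  move=> d hd.
  have : X *m col_mx 0 d = 0 by rewrite -{1}(hsubmxK X) mul_row_col mulmx0 add0r.
  move/hXinj => h0; have := congr1 dsubmx h0; rewrite col_mxKd => ->.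
  by apply/matrixP => i j; rewrite !mxE.
have sPF : sublin PF.
  move=> a c u v ha hc; rewrite /PF.
  have eu : usubmx (a *: u + c *: v) = a *: usubmx u + c *: usubmx v.
    by apply/matrixP => i j; rewrite !mxE.
  have ed : dsubmx (a *: u + c *: v) = a *: dsubmx u + c *: dsubmx v.
    by apply/matrixP => i j; rewrite !mxE.
  rewrite eu ed.
  have := norm2_sublin (usubmx u) (usubmx v) ha hc.
  have := norm1_sublin (dsubmx u) (dsubmx v) ha hc.
  nra.
have sPG : sublin PG.
  move=> a c u v ha hc; rewrite /PG.
  have := norm1_sublin u v ha hc; nra.
have uF := uniq_min (z := y) hc0 sPF hXinj.
have amF : forall beta, is_argmin (f_lam X y lam) beta -> is_argmin (Fg c0 y X PF) beta.
  by move=> beta h z; rewrite -!hFe.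
set g := gammahat b.
split; [split|split].
- move=> h1.
  have hu : forall u, f_lam X y lam (col_mx b g) <= f_lam X y lam (col_mx u g).
    by move=> u; have := h1 u; rewrite dotv0 addr0.
  have hv : forall v, f_lam X y lam (col_mx b g) <= f_lam X y lam (col_mx b v).
    by move=> v; rewrite !hcol; have := hgamma b v; rewrite -/g; lra.
  have amin : is_argmin (f_lam X y lam) (col_mx b g).
    move=> beta; rewrite -(vsubmxK beta).
    set u := usubmx beta; set v := dsubmx beta.
    set b0 := col_mx b g.
    set Du : 'cV[R]_(k + m) := col_mx (u - b) 0.
    set Dv : 'cV[R]_(k + m) := col_mx 0 (v - g).
    have hdu := @dir_lemma _ _ _ c0 y X PF b0 Du (lam * (norm2 u + norm1 g)) (ltW hc0).
    have hdv := @dir_lemma _ _ _ c0 y X PF b0 Dv (lam * (norm2 b + norm1 v)) (ltW hc0).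
    have eDu : forall t, b0 + t *: Du = col_mx ((1 - t) *: b + t *: u) g.
      move=> t; rewrite /b0 /Du scale_col_mx add_col_mx scaler0 addr0.
      congr col_mx; apply/matrixP => i j; rewrite !mxE; ring.
    have eDv : forall t, b0 + t *: Dv = col_mx b ((1 - t) *: g + t *: v).
      move=> t; rewrite /b0 /Dv scale_col_mx add_col_mx scaler0 addr0.
      congr col_mx; apply/matrixP => i j; rewrite !mxE; ring.
    have Pb0 : PF b0 = lam * (norm2 b + norm1 g) by rewrite /PF col_mxKu col_mxKd.
    have lu : forall t, 0 < t -> t <= 1 -> PF (b0 + t *: Du) <= (1 - t) * PF b0 + t * (lam * (norm2 u + norm1 g)).
      move=> t t0 t1; rewrite eDu Pb0 /PF col_mxKu col_mxKd.
      have := norm2_sublin b u (a := 1 - t) (c := t); rewrite subr_ge0 => /(_ t1 (ltW t0)).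
      nra.
    have lv : forall t, 0 < t -> t <= 1 -> PF (b0 + t *: Dv) <= (1 - t) * PF b0 + t * (lam * (norm2 b + norm1 v)).
      move=> t t0 t1; rewrite eDv Pb0 /PF col_mxKu col_mxKd.
      have := norm1_sublin g v (a := 1 - t) (c := t); rewrite subr_ge0 => /(_ t1 (ltW t0)).
      nra.
    have fu : forall t, 0 < t -> t <= 1 -> Fg c0 y X PF b0 <= Fg c0 y X PF (b0 + t *: Du).
      by move=> t _ _; rewrite -!hFe eDu; apply: hu.
    have fv : forall t, 0 < t -> t <= 1 -> Fg c0 y X PF b0 <= Fg c0 y X PF (b0 + t *: Dv).
      by move=> t _ _; rewrite -!hFe eDv; apply: hv.
    have := hdu fu lu; have := hdv fv lv.
    have eb : col_mx u v = b0 + 1 *: (Du + Dv).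
      rewrite scale1r /b0 /Du /Dv !add_col_mx addr0 add0r.
      congr col_mx; apply/matrixP => i j; rewrite !mxE; ring.
    rewrite !hFe eb Fg_exp /Fg mulmxDr dotvDr Pb0.
    have -> : PF (b0 + 1 *: (Du + Dv)) = lam * (norm2 u + norm1 v).
      by rewrite -eb /PF col_mxKu col_mxKd.
    have := mulr_ge0 (ltW hc0) (sq_ge0 (X *m Du + X *m Dv)).
    rewrite expr1n !mul1r; lra.
  symmetry; apply: uF; apply: amF => //.
- move=> e z; rewrite dotv0 addr0 -e; apply: hbeta.
- by move=> ->; rewrite col_mxKu.
- move=> e.
  have eb : betahat = col_mx b (dsubmx betahat) by rewrite -e vsubmxK.
  have hmin : is_argmin (partial_obj X y lam b) (dsubmx betahat).
    move=> v; have := hbeta (col_mx b v); rewrite {1}eb !hcol; lra.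
  have uG := uniq_min (z := y - lsubmx X *m b) hc0 sPG hXrinj.
  have : dsubmx betahat = g.
    apply: uG; move=> z; rewrite -!hGe; [apply: hmin | apply: hgamma].
  by move=> hd; rewrite eb hd.
Qed.
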